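(* Let $t_1,t_2$ be types, $p$ a privilege, and $u:\mathbb{N}\to[\![t_1\to t_2]\!]$ an ascending chain. If $\mathsf{pure}\,p\,(t_1\to t_2)(u_i)$ holds for every $i$, then $\mathsf{pure}\,p\,(t_1\to t_2)(\bigsqcup_i u_i)$ holds.
   Context: Fix a set $\mathsf{Privileges}$. Types $t::=\mathtt{bool}\mid t_1\to t_2$. $\bot,\star$ are two distinct values, neither booleans nor functions. For a cpo $C$ (poset with lubs of ascending chains), $C_{\bot\star}=C\cup\{\bot,\star\}$ with $u\le v$ iff $u=\bot$, or $u=v$, or $u,v\in C$ with $u\le v$. $[\![\mathtt{bool}]\!]=\{\mathsf{true},\mathsf{false}\}$ and $\mathcal{P}(\mathsf{Privileges})$ are ordered by equality; $[\![t_1\to t_2]\!]=\mathcal{P}(\mathsf{Privileges})\to[\![t_1]\!]\to[\![t_2]\!]_{\bot\star}$, continuous functions ordered pointwise (lubs pointwise). Semantic $p$-purity $\mathsf{pure}\,p\,t$ on $[\![t]\!]_{\bot\star}$: $\mathsf{pure}\,p\,t(\bot)$ and $\mathsf{pure}\,p\,t(\star)$ are true; $\mathsf{pure}\,p\,\mathtt{bool}(b)$ is true; $\mathsf{pure}\,p\,(t_1\to t_2)(f)$ iff for all $P\subseteq\mathsf{Privileges}$ and all $d\in[\![t_1]\!]$, $\mathsf{pure}\,p\,t_1(d)$ implies both $\mathsf{pure}\,p\,t_2(fPd)$ and $fPd=f(P\setminus\{p\})d$. *)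

(* Defs.v *)
Set Implicit Arguments.

Inductive ty : Type :=
| TBool : ty
| TArr : ty -> ty -> ty.

Record cpo : Type := Cpo { car : Type; le : car -> car -> Prop }.

Definition chain (C : cpo) (c : nat -> car C) : Prop :=
  forall n, le C (c n) (c (S n)).

Definition is_lub (C : cpo) (c : nat -> car C) (l : car C) : Prop :=
  (forall n, le C (c n) l) /\
  (forall u, (forall n, le C (c n) u) -> le C l u).

Definition monotone (A B : cpo) (g : car A -> car B) : Prop :=
  forall x y, le A x y -> le B (g x) (g y).

Definition continuous (A B : cpo) (g : car A -> car B) : Prop :=
  monotone A B g /\
  forall c l, chain A c -> is_lub A c l -> is_lub B (fun n => g (c n)) (g l).

Inductive lift (A : Type) : Type :=
| Bot : lift A
| Star : lift A
| Val : A -> lift A.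
Arguments Bot {A}.
Arguments Star {A}.

Definition lift_le (C : cpo) (u v : lift (car C)) : Prop :=
  u = Bot \/ u = v \/
  exists a b, u = Val a /\ v = Val b /\ le C a b.

Definition lift_cpo (C : cpo) : cpo := Cpo (@lift_le C).

(* Subsets of Privileges; P(Privileges) is ordered by equality (discrete). *)
Definition privset (Priv : Type) : Type := Priv -> Prop.

Definition remove (Priv : Type) (P : privset Priv) (p : Priv) : privset Priv :=
  fun x => P x /\ x <> p.

(* [[t]] : continuous functions P(Priv) -> [[t1]] -> [[t2]]_{bot,star},
   ordered pointwise. Since P(Priv) is discrete, continuity of the curried
   function amounts to continuity of each [f P]. *)
Fixpoint den (Priv : Type) (t : ty) : cpo :=
  match t with
  | TBool => Cpo (@eq bool)
  | TArr t1 t2 =>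
      Cpo (fun (f g : { f : privset Priv -> car (den Priv t1) ->
                                 car (lift_cpo (den Priv t2))
                       | forall P, continuous (den Priv t1)
                                     (lift_cpo (den Priv t2)) (f P) }) =>
             forall P d, le (lift_cpo (den Priv t2))
                            (proj1_sig f P d) (proj1_sig g P d))
  end.

Fixpoint pure (Priv : Type) (p : Priv) (t : ty) : car (lift_cpo (den Priv t)) -> Prop :=
  match t return car (lift_cpo (den Priv t)) -> Prop with
  | TBool => fun v => True
  | TArr t1 t2 => fun v =>
      match v with
      | Bot => True
      | Star => True
      | Val f =>
          forall (P : privset Priv) (d : car (den Priv t1)),
            pure p t1 (Val d) ->
            pure p t2 (proj1_sig f P d) /\
            proj1_sig f P d = proj1_sig f (remove P p) d
      end
  end.

(* Main.v *)
Require Import Defs.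
From Stdlib Require Import Classical ClassicalEpsilon FunctionalExtensionality ProofIrrelevance Arith Lia.
Set Implicit Arguments.

Definition ord_ok (C : cpo) :=
  (forall x, le C x x) /\ (forall x y z, le C x y -> le C y z -> le C x z) /\
  (forall x y, le C x y -> le C y x -> x = y).
Definition has_lubs (C : cpo) := forall c, chain C c -> exists l, is_lub C c l.

Lemma chain_mono (C : cpo) (c : nat -> car C) :
  ord_ok C -> chain C c -> forall n m, n <= m -> le C (c n) (c m).
Proof.
  intros [Hr [Ht _]] Hc n m H. induction H. apply Hr. eapply Ht; eauto.
Qed.

Arguments chain_mono [C c] _ _ n m _.

Lemma lift_ok (C : cpo) : ord_ok C -> ord_ok (lift_cpo C).
Proof.
  intros [Hr [Ht Ha]]. split; [|split]; simpl; unfold lift_le.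
  - intros x. right; left; reflexivity.
  - intros x y z [H1|[H1|[a [b [E1 [E2 H1]]]]]] H2.
    + left; auto.
    + subst; auto.
    + subst. destruct H2 as [H2|[H2|[a' [b' [E1 [E2 H2]]]]]]; try discriminate.
      * subst. right; right; eauto.
      * injection E1; intros; subst. right; right; exists a, b'; eauto.
  - intros x y [H1|[H1|[a [b [E1 [E2 H1]]]]]] H2.
    + subst. destruct H2 as [H2|[H2|[a' [b' [E1 [E2 H2]]]]]]; auto; discriminate.
    + auto.
    + subst. destruct H2 as [H2|[H2|[a' [b' [E1 [E2 H2]]]]]]; try discriminate; auto.
      injection E1; injection E2; intros; subst. f_equal; auto.
Qed.

Lemma le_Star_inv (C : cpo) v : lift_le C Star v -> v = Star.
Proof. intros [H|[H|[a [b [E _]]]]]; try discriminate; auto. Qed.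

Lemma le_Bot_inv (C : cpo) v : lift_le C v Bot -> v = Bot.
Proof. intros [H|[H|[a [b [_ [E _]]]]]]; try discriminate; auto. Qed.

Lemma le_Val_inv (C : cpo) a v : ord_ok C -> lift_le C (Val a) v -> exists b, v = Val b /\ le C a b.
Proof.
  intros [Hr _] [H|[H|[a' [b [E1 [E2 H]]]]]]; try discriminate.
  - subst. exists a; auto.
  - injection E1; intros; subst. eauto.
Qed.

Lemma Val_le (C : cpo) a b : le C a b -> lift_le C (Val a) (Val b).
Proof. intros. right; right; eauto. Qed.

Lemma Val_le_inv (C : cpo) a b : ord_ok C -> lift_le C (Val a) (Val b) -> le C a b.
Proof. intros O H. destruct (le_Val_inv O H) as [b' [E H']]. injection E; intros; subst; auto. Qed.

Lemma val_tail (C : cpo) (c : nat -> lift (car C)) N a :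
  ord_ok C -> chain (lift_cpo C) c -> c N = Val a ->
  exists g : nat -> car C, chain C g /\ (forall k, c (N + k) = Val (g k)) /\
    (forall w, (forall k, le C (g k) w) -> forall n, lift_le C (c n) (Val w)).
Proof.
  intros O Hc E.
  pose proof (lift_ok O) as LO.
  assert (Hf : forall k, exists b, c (N + k) = Val b).
  { intros k. assert (H := chain_mono LO Hc N (N + k) ltac:(lia)).
    rewrite E in H. destruct (le_Val_inv O H) as [b [Eb _]]. eauto. }
  set (g := fun k => match c (N + k) with Val b => b | _ => a end).
  assert (Hg : forall k, c (N + k) = Val (g k)).
  { intros k. destruct (Hf k) as [b Eb]. unfold g. rewrite Eb. auto. }
  exists g. split; [|split; auto].
  - intros k. apply (Val_le_inv O). rewrite <- !Hg.
    replace (N + S k) with (S (N + k)) by lia. apply Hc.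
  - intros w Hw n. destruct (le_lt_dec N n) as [Hn|Hn].
    + replace n with (N + (n - N)) by lia. rewrite Hg. apply Val_le; auto.
    + destruct LO as [_ [Ht _]]. eapply Ht.
      apply (chain_mono (lift_ok O) Hc n N); lia.
      replace N with (N + 0) by lia. rewrite Hg. apply Val_le; auto.
Qed.

Arguments val_tail [C c N a] _ _ _.

Lemma lift_lubs (C : cpo) : ord_ok C -> has_lubs C -> has_lubs (lift_cpo C).
Proof.
  intros O HL c Hc. pose proof (lift_ok O) as LO.
  destruct (classic (forall n, c n = Bot)) as [Hb|Hb].
  - exists Bot. split.
    + intros n. rewrite Hb. apply LO.
    + intros. left; auto.
  - apply not_all_ex_not in Hb. destruct Hb as [N HN].
    destruct (c N) as [| |a] eqn:E; [congruence| |].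
    + exists Star. split.
      * intros n. destruct (le_lt_dec n N).
        -- rewrite <- E. apply (chain_mono LO Hc); auto.
        -- assert (H := chain_mono LO Hc N n ltac:(lia)). rewrite E in H.
           apply le_Star_inv in H. rewrite H. apply LO.
      * intros v Hv. specialize (Hv N). rewrite E in Hv. simpl in Hv.
        apply le_Star_inv in Hv. subst. apply LO.
    + destruct (val_tail O Hc E) as [g [Hg [Eg Hup]]].
      destruct (HL g Hg) as [b [Hb1 Hb2]]. exists (Val b). split.
      * apply Hup. auto.
      * intros v Hv. pose proof (Hv N) as HvN. rewrite E in HvN.
        destruct (le_Val_inv O HvN) as [w [Ew _]]. subst v.
        apply Val_le. apply Hb2. intros k. apply (Val_le_inv O).
        rewrite <- Eg. apply Hv.
Qed.

Lemma arrow_pw_lub (Priv : Type) t1 t2 :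
  ord_ok (den Priv t2) -> has_lubs (den Priv t2) ->
  forall u, chain (den Priv (TArr t1 t2)) u ->
  exists l, is_lub (den Priv (TArr t1 t2)) u l /\
    forall P d, is_lub (lift_cpo (den Priv t2)) (fun n => proj1_sig (u n) P d) (proj1_sig l P d).
Proof.
  intros O HL u Hu.
  pose proof (lift_ok O) as LO. destruct LO as [Lr [Lt La]].
  assert (E : forall P d, exists l, is_lub (lift_cpo (den Priv t2)) (fun n => proj1_sig (u n) P d) l).
  { intros P d. apply (lift_lubs O HL). intros n. apply (Hu n). }
  pose (F := fun P d => proj1_sig (constructive_indefinite_description _ (E P d))).
  assert (FS : forall P d, is_lub (lift_cpo (den Priv t2)) (fun n => proj1_sig (u n) P d) (F P d)).
  { intros P d. exact (proj2_sig (constructive_indefinite_description _ (E P d))). }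
  clearbody F.
  assert (Fm : forall P, monotone (den Priv t1) (lift_cpo (den Priv t2)) (F P)).
  { intros P x y Hxy. apply (FS P x). intros n. eapply Lt.
    apply (proj1 (proj2_sig (u n) P)); eauto. apply (FS P y). }
  assert (Fc : forall P, continuous (den Priv t1) (lift_cpo (den Priv t2)) (F P)).
  { intros P. split; auto. intros c l Hc Hl. split.
    - intros m. apply Fm. apply Hl.
    - intros v Hv. apply (FS P l). intros n.
      pose proof (proj2 (proj2_sig (u n) P) c l Hc Hl) as Hn.
      apply Hn. intros m. eapply Lt; [|apply Hv]. apply (FS P (c m)). }
  exists (exist _ F Fc). simpl. split; auto. split.
  - intros n P d. apply (FS P d).
  - intros w Hw P d. apply (FS P d). intros n. apply Hw.
Qed.

Lemma den_all (Priv : Type) t : ord_ok (den Priv t) /\ has_lubs (den Priv t).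
Proof.
  induction t as [|t1 [O1 L1] t2 [O2 L2]].
  - split.
    + simpl. split; [|split]; simpl; intros; subst; auto.
    + intros c Hc. exists (c 0). simpl in *. split.
      * intros n. unfold chain in Hc; simpl in *. induction n as [|n IHn]. reflexivity. rewrite <- IHn. symmetry. apply Hc.
      * intros v Hv. apply Hv.
  - split.
    + destruct (lift_ok O2) as [Lr [Lt La]]. split; [|split]; simpl.
      * intros f P d. apply Lr.
      * intros f g h H1 H2 P d. eapply Lt; [apply H1|apply H2].
      * intros [f Hf] [g Hg] H1 H2. simpl in *.
        assert (f = g).
        { apply functional_extensionality; intros P.
          apply functional_extensionality; intros d. apply La; auto. }
        subst. f_equal. apply proof_irrelevance.
    + intros u Hu. destruct (arrow_pw_lub (t1:=t1) O2 L2 Hu) as [l [Hl _]]. eauto.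
Qed.

Lemma lub_unique (C : cpo) c l1 l2 : ord_ok C -> is_lub C c l1 -> is_lub C c l2 -> l1 = l2.
Proof.
  intros [_ [_ Ha]] [H1 H1'] [H2 H2']. apply Ha; auto.
Qed.

Lemma core (Priv : Type) (p : Priv) t1 t2
  (IH2 : forall c l, chain (lift_cpo (den Priv t2)) c -> is_lub (lift_cpo (den Priv t2)) c l ->
         (forall n, pure p t2 (c n)) -> pure p t2 l)
  (u : nat -> car (den Priv (TArr t1 t2))) (lu : car (den Priv (TArr t1 t2))) :
  chain (den Priv (TArr t1 t2)) u ->
  is_lub (den Priv (TArr t1 t2)) u lu ->
  (forall i, pure p (TArr t1 t2) (Val (u i))) ->
  pure p (TArr t1 t2) (Val lu).
Proof.
  intros Hu Hlu Hp.
  destruct (den_all Priv t2) as [O2 L2]. pose proof (lift_ok O2) as LO.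
  destruct (arrow_pw_lub (t1:=t1) O2 L2 Hu) as [l [Hl Hpw]].
  destruct (den_all Priv (TArr t1 t2)) as [OA _].
  assert (El : lu = l) by (eapply lub_unique; eauto). subst l.
  simpl. intros P d Hd.
  assert (Hch : forall Q, chain (lift_cpo (den Priv t2)) (fun n => proj1_sig (u n) Q d)).
  { intros Q n. apply (Hu n). }
  split.
  - apply (IH2 _ _ (Hch P) (Hpw P d)). intros n. apply (Hp n P d Hd).
  - assert (Eq : (fun n => proj1_sig (u n) (remove P p) d) = (fun n => proj1_sig (u n) P d)).
    { apply functional_extensionality. intros n. symmetry. apply (Hp n P d Hd). }
    pose proof (Hpw (remove P p) d) as H2. rewrite Eq in H2.
    exact (lub_unique LO (Hpw P d) H2).
Qed.

Lemma pure_lub (Priv : Type) (p : Priv) t : forall c l,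
  chain (lift_cpo (den Priv t)) c -> is_lub (lift_cpo (den Priv t)) c l ->
  (forall n, pure p t (c n)) -> pure p t l.
Proof.
  induction t as [|t1 IH1 t2 IH2]; intros c l Hc Hl Hp.
  - simpl. auto.
  - destruct l as [| |f]; try (simpl; auto; fail).
    destruct (den_all Priv (TArr t1 t2)) as [O _].
    destruct (classic (exists N a, c N = Val a)) as [[N [a E]]|Hn].
    + destruct (val_tail O Hc E) as [g [Hg [Eg Hup]]].
      apply (@core Priv p t1 t2 IH2 g); auto.
      * split.
        -- intros k. apply (Val_le_inv O). rewrite <- Eg. apply Hl.
        -- intros w Hw. apply (Val_le_inv O). apply Hl. apply Hup. auto.
      * intros k. rewrite <- Eg. apply Hp.
    + exfalso.
      assert (Hs : forall n, c n = Bot \/ c n = Star).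
      { intros n. destruct (c n) as [| |a] eqn:E; auto. exfalso; eauto. }
      destruct (classic (exists n, c n = Star)) as [[n En]|Hns].
      * pose proof (proj1 Hl n) as H. rewrite En in H. apply le_Star_inv in H. discriminate.
      * assert (H : lift_le _ (Val f) Bot).
        { apply Hl. intros n. destruct (Hs n) as [E|E]; [rewrite E; left; auto|].
          exfalso; eauto. }
        apply le_Bot_inv in H. discriminate.
Qed.

Theorem lemma3 (Priv : Type) (t1 t2 : ty) (p : Priv)
  (u : nat -> car (den Priv (TArr t1 t2))) (lu : car (den Priv (TArr t1 t2))) :
  chain (den Priv (TArr t1 t2)) u ->
  is_lub (den Priv (TArr t1 t2)) u lu ->
  (forall i, pure p (TArr t1 t2) (Val (u i))) ->
  pure p (TArr t1 t2) (Val lu).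
Proof.
  apply (@core Priv p t1 t2). apply pure_lub.
Qed.
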